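(* Let $\Omega=\mathbb T^2$, $\omega,\nu\in(0,1)$, $T>0$, and let $\vec u^o:\Omega\times[0,T]\to\mathbb R^2$ be a given smooth velocity field (in particular $\operatorname{div}\vec u^o\in L^1(0,T;L^\infty(\Omega))$). Let $(h_m,A_m)$ be a sufficiently regular (e.g. classical) solution on $[0,T]$ of the transport system $$\partial_t h_m+\operatorname{div}(h_m\vec u^o)=\mathcal S_{h_m,\omega,\nu},\qquad \partial_tA_m+\operatorname{div}(A_m\vec u^o)=\mathcal S_{A_m,\omega,\nu}+A_m\operatorname{div}\vec u^o\cdot\chi^\omega_{A_m},$$ with initial data $A_m(0)=A_{\rm in}$ satisfying $0\le A_{\rm in}\le1$. Then $0\le A_m(t)\le 1$ on $\Omega$ for all $t\in[0,T]$.
   Context: $\psi^+=\max\{\psi,0\}$, $\psi^-=\psi^+-\psi$. $f:\mathbb R\to\mathbb R$ is a bounded smooth function with $\underline f\le f\le\overline f$, $h_0>0$ a constant. For functions $h,A$: $$\chi^\nu_h=\frac{h^+}{h^++\nu},\qquad \mathcal S_{h,\omega,\nu}=\big[f(h^+/(A^++\omega))A+(1-A)f(0)\big]\chi^\nu_h,$$ $$\mathcal S_{A,\omega,\nu}=\frac{(f(0))^+}{h_0+\nu}(1-A)-\frac{A}{2h^++\nu}\cdot\frac{\sqrt{|\mathcal S_{h,\omega,\nu}|^2+\omega^2}-\mathcal S_{h,\omega,\nu}}{2},\qquad \chi^\omega_A=1-\frac{(1-A)^+}{(1-A)^++\omega}.$$ In the system, $\mathcal S_{h_m,\omega,\nu}$,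 $\mathcal S_{A_m,\omega,\nu}$, $\chi^\omega_{A_m}$ mean these expressions evaluated at $(h,A)=(h_m,A_m)$. *)

(* Defs.v *)
From Stdlib Require Import Reals.
From Coquelicot Require Import Coquelicot.
Open Scope R_scope.

Definition pos (x : R) : R := Rmax x 0.

Definition chi_h (nu h : R) : R := pos h / (pos h + nu).

Definition S_h (f : R -> R) (omega nu h A : R) : R :=
  (f (pos h / (pos A + omega)) * A + (1 - A) * f 0) * chi_h nu h.

Definition S_A (f : R -> R) (h0 omega nu h A : R) : R :=
  pos (f 0) / (h0 + nu) * (1 - A)
  - A / (2 * pos h + nu) *
    ((sqrt ((S_h f omega nu h A) ^ 2 + omega ^ 2) - S_h f omega nu h A) / 2).

Definition chi_A (omega A : R) : R := 1 - pos (1 - A) / (pos (1 - A) + omega).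

(* Space-time fields are functions F t x y on R x R^2. *)

(* Periodicity with period 1 in both space variables: functions on T^2 = (R/Z)^2. *)
Definition periodic2 (g : R -> R -> R) : Prop :=
  forall x y, g (x + 1) y = g x y /\ g x (y + 1) = g x y.

Definition periodic3 (F : R -> R -> R -> R) : Prop :=
  forall t, periodic2 (F t).

Definition cont3 (G : R -> R -> R -> R) : Prop :=
  forall t x y,
    continuous (fun p : R * R * R => G (fst (fst p)) (snd (fst p)) (snd p)) (t, x, y).

Definition C1_3 (F : R -> R -> R -> R) : Prop :=
  exists Ft Fx Fy : R -> R -> R -> R,
    (forall t x y,
        is_derive (fun s => F s x y) t (Ft t x y) /\
        is_derive (fun s => F t s y) x (Fx t x y) /\
        is_derive (fun s => F t x s) y (Fy t x y)) /\
    cont3 F /\ cont3 Ft /\ cont3 Fx /\ cont3 Fy.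

Definition smooth1 (f : R -> R) : Prop := forall n x, ex_derive_n f n x.

Definition dt (F : R -> R -> R -> R) (t x y : R) : R := Derive (fun s => F s x y) t.

Definition div (U1 U2 : R -> R -> R -> R) (t x y : R) : R :=
  Derive (fun s => U1 t s y) x + Derive (fun s => U2 t x s) y.

(* Main.v *)
Require Import Defs.
From Stdlib Require Import Reals Lra Classical.
From Coquelicot Require Import Coquelicot.
Open Scope R_scope.
From Stdlib Require Import ClassicalEpsilon.
From Stdlib Require Import List.
Definition cont3e (G : R -> R -> R -> R) : Prop :=
  forall t x y eps, 0 < eps -> exists d, 0 < d /\
    forall t' x' y', Rabs (t' - t) < d -> Rabs (x' - x) < d -> Rabs (y' - y) < d ->
      Rabs (G t' x' y' - G t x y) < eps.

Lemma ball_R (a e b : R) : ball a e b <-> Rabs (b - a) < e.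
Proof. reflexivity. Qed.

Lemma cont3_e G : cont3 G -> cont3e G.
Proof.
  intros H t x y eps Heps.
  specialize (H t x y).
  apply (proj1 (filterlim_locally _ _)) with (eps := mkposreal eps Heps) in H.
  destruct H as [d Hd].
  exists (pos d); split; [apply cond_pos|].
  intros t' x' y' H1 H2 H3.
  apply (Hd (t', x', y')).
  split; [split|]; assumption.
Qed.
Lemma cont_induction (P : R -> Prop) (T : R) : 0 < T -> P 0 ->
  (forall t, 0 < t <= T -> (forall s, 0 <= s < t -> P s) -> P t) ->
  (forall t, 0 <= t < T -> (forall s, 0 <= s <= t -> P s) ->
     exists d, 0 < d /\ forall s, t <= s <= t + d -> P s) ->
  forall t, 0 <= t <= T -> P t.
Proof.
  intros HT H0 Hcl Hext.
  set (E := fun t => 0 <= t <= T /\ forall s, 0 <= s <= t -> P s).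
  assert (Hb : bound E) by (exists T; intros z [Hz _]; lra).
  assert (He : exists x, E x).
  { exists 0; split; [lra|]. intros s Hs. replace s with 0 by lra; auto. }
  destruct (completeness E Hb He) as [m [Hub Hlub]].
  assert (Hm0 : 0 <= m) by (apply Hub; split; [lra|]; intros s Hs; replace s with 0 by lra; auto).
  assert (HmT : m <= T) by (apply Hlub; intros z [Hz _]; lra).
  assert (Hbelow : forall s, 0 <= s < m -> P s).
  { intros s Hs. destruct (classic (exists e, E e /\ s <= e)) as [[e [[_ He1] Hse]]|Hn].
    - apply He1; lra.
    - exfalso. assert (m <= s). { apply Hlub. intros z Hz. destruct (Rle_dec z s); auto.
        exfalso; apply Hn; exists z; split; auto; lra. } lra. }
  assert (Hm : forall s, 0 <= s <= m -> P s).
  { intros s Hs. destruct (Rle_lt_or_eq_dec s m (proj2 Hs)) as [Hl|Heq].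
    - apply Hbelow; lra.
    - subst s. destruct (Req_dec m 0) as [Hz|Hz].
      + rewrite Hz; auto.
      + apply Hcl; [lra|]. auto. }
  assert (HmT' : m = T).
  { destruct (Rle_lt_or_eq_dec m T HmT) as [Hl|]; auto. exfalso.
    destruct (Hext m (conj Hm0 Hl) Hm) as [d [Hd Hd']].
    assert (E (Rmin (m + d) T)).
    { split. { split; [apply Rmin_glb; lra| apply Rmin_r]. }
      intros s Hs. destruct (Rle_dec s m).
      - apply Hm; lra.
      - apply Hd'. split; [lra|]. assert (Rmin (m+d) T <= m + d) by apply Rmin_l. lra. }
    assert (Hmm : Rmin (m + d) T <= m) by (apply Hub; auto).
    unfold Rmin in Hmm; destruct (Rle_dec (m+d) T); lra. }
  intros t Ht. apply Hm. lra.
Qed.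
Lemma per1_nat (g : R -> R) : (forall x, g (x + 1) = g x) ->
  forall n x, g (x + INR n) = g x.
Proof.
  intros H n; induction n as [|n IH]; intros x.
  - simpl. f_equal. lra.
  - rewrite S_INR. replace (x + (INR n + 1)) with ((x + INR n) + 1) by lra.
    rewrite H; auto.
Qed.

Lemma per1_Z (g : R -> R) : (forall x, g (x + 1) = g x) ->
  forall n x, g (x + IZR n) = g x.
Proof.
  intros H n x. destruct n as [|p|p].
  - simpl. f_equal; lra.
  - rewrite <- Znat.positive_nat_Z, <- INR_IZR_INZ. apply per1_nat; auto.
  - replace (IZR (Z.neg p)) with (- INR (Pos.to_nat p)).
    + rewrite <- (per1_nat g H (Pos.to_nat p) (x + - INR (Pos.to_nat p))).
      f_equal; lra.
    + rewrite INR_IZR_INZ, Znat.positive_nat_Z. rewrite <- Pos2Z.opp_pos, opp_IZR. reflexivity.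
Qed.

Lemma frac_exists (x : R) : exists n : Z, 0 <= x - IZR n <= 1.
Proof.
  destruct (archimed x) as [H1 H2]. exists (up x - 1)%Z.
  rewrite minus_IZR. simpl. lra.
Qed.

Lemma per2_reduce (g : R -> R -> R) : periodic2 g ->
  forall x y, exists x0 y0, 0 <= x0 <= 1 /\ 0 <= y0 <= 1 /\ g x y = g x0 y0.
Proof.
  intros H x y. destruct (frac_exists x) as [n Hn]. destruct (frac_exists y) as [m Hm].
  exists (x - IZR n), (y - IZR m). split; [auto|split; [auto|]].
  assert (Ex : g x y = g (x - IZR n) y).
  { rewrite <- (per1_Z (fun z => g z y) (fun z => proj1 (H z y)) n (x - IZR n)).
    f_equal; lra. }
  rewrite Ex.
  rewrite <- (per1_Z (fun z => g (x - IZR n) z) (fun z => proj2 (H (x - IZR n) z)) m (y - IZR m)).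
  f_equal; lra.
Qed.
Lemma gen_nonneg (Phi Phit : R -> R -> R -> R) (T : R) : 0 < T ->
  (forall t x y, is_derive (fun s => Phi s x y) t (Phit t x y)) ->
  cont3e Phi -> cont3e Phit -> periodic3 Phi -> (forall x y, 0 <= Phi 0 x y) ->
  (forall t x y, 0 <= t < T -> 0 <= x <= 1 -> 0 <= y <= 1 ->
     (forall x' y', 0 <= Phi t x' y') -> Phi t x y = 0 -> 0 < Phit t x y) ->
  forall t x y, 0 <= t <= T -> 0 <= Phi t x y.
Proof.
  intros HT Hd HcP HcPt Hper H0 Hkey t x y Ht.
  revert x y.
  apply (cont_induction (fun t => forall x y, 0 <= Phi t x y) T HT H0); auto.
  - clear t Ht. intros t Ht Hb x y.
    destruct (Rle_dec 0 (Phi t x y)) as [|Hn]; auto. exfalso.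
    destruct (HcP t x y (- Phi t x y)) as [d [Hd0 Hd1]]; [lra|].
    set (s := Rmax 0 (t - d/2)).
    assert (Hs : 0 <= s < t) by (unfold s, Rmax; destruct (Rle_dec 0 (t - d/2)); lra).
    assert (Hst : Rabs (s - t) < d).
    { unfold s, Rmax; destruct (Rle_dec 0 (t - d/2)); rewrite Rabs_left; lra. }
    specialize (Hd1 s x y Hst).
    specialize (Hd1 ltac:(rewrite Rminus_eq_0, Rabs_R0; lra) ltac:(rewrite Rminus_eq_0, Rabs_R0; lra)).
    specialize (Hb s Hs x y).
    apply Rabs_def2 in Hd1. lra.
  - clear t Ht. intros t Ht Hall.
    assert (Pt := Hall t ltac:(lra)).
    assert (Hloc : forall x y, exists dl : posreal, 0 <= x <= 1 -> 0 <= y <= 1 ->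
      forall s x' y', t <= s < t + dl -> Rabs (x' - x) < dl -> Rabs (y' - y) < dl ->
        0 <= Phi s x' y').
    { intros x y. destruct (classic (0 <= x <= 1 /\ 0 <= y <= 1)) as [[Hx Hy]|Hn].
      2:{ exists (mkposreal 1 Rlt_0_1). intros; exfalso; tauto. }
      destruct (Rle_lt_or_eq_dec 0 (Phi t x y) (Pt x y)) as [Hpos|Hz].
      - destruct (HcP t x y (Phi t x y) Hpos) as [d [Hd0 Hd1]].
        exists (mkposreal d Hd0). simpl. intros _ _ s x' y' Hs Hx' Hy'.
        assert (Rabs (s - t) < d) by (rewrite Rabs_right; lra).
        specialize (Hd1 s x' y' H Hx' Hy'). apply Rabs_def2 in Hd1. lra.
      - assert (Hpt : 0 < Phit t x y) by (apply Hkey; auto).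
        destruct (HcPt t x y (Phit t x y) Hpt) as [d [Hd0 Hd1]].
        exists (mkposreal d Hd0). simpl. intros _ _ s x' y' Hs Hx' Hy'.
        destruct (Rle_lt_or_eq_dec t s (proj1 Hs)) as [Hlt|Heq].
        + assert (Hinc : Phi t x' y' < Phi s x' y').
          { apply (incr_function (fun r => Phi r x' y') (t - d) (t + d) (fun r => Phit r x' y')).
            - intros r _ _. apply Hd.
            - intros r Hr1 Hr2. simpl in Hr1, Hr2.
              assert (Rabs (r - t) < d) by (apply Rabs_def1; lra).
              specialize (Hd1 r x' y' H Hx' Hy'). apply Rabs_def2 in Hd1. lra.
            - simpl; lra.
            - auto.
            - simpl; lra. }
          specialize (Pt x' y'). lra.
        + subst s. auto. }
    assert (Hex : forall x y, { dl : posreal | 0 <= x <= 1 -> 0 <= y <= 1 ->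
      forall s x' y', t <= s < t + dl -> Rabs (x' - x) < dl -> Rabs (y' - y) < dl ->
        0 <= Phi s x' y' }).
    { intros x y. apply constructive_indefinite_description. apply Hloc. }
    set (delta := fun x y => proj1_sig (Hex x y)).
    destruct (compactness_value_2d 0 1 0 1 delta) as [d Hdd].
    exists (d / 2). split; [apply Rdiv_lt_0_compat; [apply cond_pos|lra]|].
    intros s Hs x y.
    destruct (per2_reduce (Phi s) (Hper s) x y) as [x0 [y0 [Hx0 [Hy0 ->]]]].
    apply NNPP. intro Hneg. apply (Hdd x0 y0 Hx0 Hy0).
    intros [u [v [Hu [Hv [Hxu [Hyv Hdu]]]]]].
    apply Hneg.
    apply (proj2_sig (Hex u v) Hu Hv s x0 y0); auto.
    fold (delta u v). pose proof (cond_pos d). lra.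
Qed.
Definition G3 (G : R -> R -> R -> R) (p : Compactness.Tn 3 R) : R :=
  match p with (t, (x, (y, _))) => G t x y end.

Fixpoint lmax (g : Compactness.Tn 3 R -> R) (l : list (Compactness.Tn 3 R)) : R :=
  match l with nil => 0 | cons p l' => Rmax (Rabs (g p) + 1) (lmax g l') end.

Lemma lmax_in g l p : In p l -> Rabs (g p) + 1 <= lmax g l.
Proof.
  induction l as [|q l IH]; simpl; [tauto|].
  intros [->|H]; [apply Rmax_l|]. eapply Rle_trans; [apply IH; auto| apply Rmax_r].
Qed.

Lemma bounded3 (G : R -> R -> R -> R) (T : R) : cont3e G ->
  exists K, forall t x y, 0 <= t <= T -> 0 <= x <= 1 -> 0 <= y <= 1 -> Rabs (G t x y) <= K.
Proof.
  intros HG.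
  assert (Hex : forall p : Compactness.Tn 3 R, { d : posreal |
     forall t' x' y', Rabs (t' - fst p) < d -> Rabs (x' - fst (snd p)) < d ->
       Rabs (y' - fst (snd (snd p))) < d -> Rabs (G t' x' y' - G3 G p) < 1 }).
  { intros p. apply constructive_indefinite_description.
    destruct p as [t [x [y []]]]. simpl.
    destruct (HG t x y 1 Rlt_0_1) as [d [Hd0 Hd]]. exists (mkposreal d Hd0). exact Hd. }
  set (delta := fun p => proj1_sig (Hex p)).
  apply NNPP. intro Hn.
  apply (compactness_list 3 (0, (0, (0, tt))) (T, (1, (1, tt))) delta).
  intros [l Hl]. apply Hn. exists (lmax (G3 G) l).
  intros t x y Ht Hx Hy.
  destruct (Hl (t, (x, (y, tt)))) as [p [Hin [Hb Hc]]].
  { simpl. tauto. }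
  pose proof (lmax_in (G3 G) l p Hin).
  destruct p as [t0 [x0 [y0 []]]]. simpl in Hc.
  destruct Hc as [H1 [H2 [H3 _]]].
  pose proof (proj2_sig (Hex (t0, (x0, (y0, tt)))) t x y H1 H2 H3) as Hc.
  simpl in Hc, H.
  apply Rabs_def2 in Hc.
  assert (Hr := Rabs_triang (G t x y - G t0 x0 y0) (G t0 x0 y0)).
  replace (G t x y - G t0 x0 y0 + G t0 x0 y0) with (G t x y) in Hr by ring.
  assert (Rabs (G t x y - G t0 x0 y0) < 1) by (apply Rabs_def1; lra).
  lra.
Qed.
Lemma deriv_max0 f x l : is_derive f x l -> (forall z, f z <= f x) -> l = 0.
Proof.
  intros H Hm. pose (pr := exist (fun l => derivable_pt_lim f x l) l (proj1 (is_derive_Reals f x l) H)).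
  change l with (derive_pt f x pr).
  apply (deriv_maximum f (x - 1) (x + 1) x pr); try lra. intros; auto.
Qed.

Lemma deriv_min0 f x l : is_derive f x l -> (forall z, f x <= f z) -> l = 0.
Proof.
  intros H Hm. pose (pr := exist (fun l => derivable_pt_lim f x l) l (proj1 (is_derive_Reals f x l) H)).
  change l with (derive_pt f x pr).
  apply (deriv_minimum f (x - 1) (x + 1) x pr); try lra. intros; auto.
Qed.

Lemma pos_ge0 x : 0 <= Defs.pos x.
Proof. unfold pos; apply Rmax_r. Qed.
Lemma pos_of_ge x : 0 <= x -> Defs.pos x = x.
Proof. intros; unfold pos; apply Rmax_left; lra. Qed.

Lemma sqrt_gap S w : 0 < w -> S < sqrt (S ^ 2 + w ^ 2).
Proof.
  intros Hw. destruct (Rlt_or_le S 0).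
  - assert (0 <= sqrt (S^2 + w^2)) by apply sqrt_pos. lra.
  - rewrite <- (sqrt_pow2 S) at 1 by lra. apply sqrt_lt_1_alt. split.
    + apply pow2_ge_0.
    + assert (0 < w^2) by (apply pow_lt; lra). lra.
Qed.

Lemma upper_alg f h0 w nu h d : 0 < h0 -> 0 < w -> 0 < nu ->
  S_A f h0 w nu h 1 + 1 * d * (chi_A w 1 - 1) < 0.
Proof.
  intros Hh0 Hw Hnu. unfold chi_A, S_A.
  replace (1 - 1) with 0 by ring. rewrite (pos_of_ge 0) by lra.
  replace (0 / (0 + w)) with 0 by (field; lra).
  set (S := S_h f w nu h 1). pose proof (sqrt_gap S w Hw).
  assert (0 < 2 * Defs.pos h + nu) by (pose proof (pos_ge0 h); lra).
  assert (0 < 1 / (2 * Defs.pos h + nu)) by (apply Rdiv_lt_0_compat; lra).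
  assert (0 < 1 / (2 * Defs.pos h + nu) * ((sqrt (S ^ 2 + w ^ 2) - S) / 2)) by (apply Rmult_lt_0_compat; lra).
  lra.
Qed.

Lemma lower_alg f h0 w nu h A d K : 0 < h0 -> 0 < w -> 0 < nu -> A < 0 -> Rabs d <= K ->
  K * A <= S_A f h0 w nu h A + A * d * (chi_A w A - 1).
Proof.
  intros Hh0 Hw Hnu HA Hd. unfold chi_A, S_A.
  rewrite (pos_of_ge (1 - A)) by lra.
  set (S := S_h f w nu h A). pose proof (sqrt_gap S w Hw).
  assert (0 < 2 * Defs.pos h + nu) by (pose proof (pos_ge0 h); lra).
  assert (H1 : 0 <= Defs.pos (f 0) / (h0 + nu) * (1 - A)).
  { apply Rmult_le_pos; [apply Rdiv_le_0_compat; [apply pos_ge0|lra]|lra]. }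
  assert (H2 : 0 <= - (A / (2 * Defs.pos h + nu)) * ((sqrt (S ^ 2 + w ^ 2) - S) / 2)).
  { apply Rmult_le_pos; [|lra]. unfold Rdiv. rewrite Ropp_mult_distr_l.
    apply Rmult_le_pos; [lra|]. left; apply Rinv_0_lt_compat; lra. }
  set (q := (1 - A) / (1 - A + w)).
  assert (Hq : 0 <= q <= 1).
  { unfold q. split; [apply Rdiv_le_0_compat; lra|].
    apply (Rmult_le_reg_r (1 - A + w)); [lra|]. unfold Rdiv; rewrite Rmult_assoc, Rinv_l; lra. }
  replace (1 - q - 1) with (- q) by ring.
  assert (Hdd : - K <= d <= K) by (apply Rabs_le_between; auto).
  assert (A * d * - q >= K * A).
  { replace (A * d * - q) with ((- A) * (d * q)) by ring.
    replace (K * A) with ((- A) * (- K)) by ring.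
    apply Rle_ge, Rmult_le_compat_l; [lra|].
    assert (Rabs (d * q) <= K).
    { rewrite Rabs_mult, (Rabs_right q) by lra.
      pose proof (Rabs_pos d). nra. }
    apply Rabs_le_between in H3. lra. }
  lra.
Qed.

Lemma cont1e (g : R -> R) : (forall t, ex_derive g t) ->
  forall t eps, 0 < eps -> exists d, 0 < d /\ forall t', Rabs (t' - t) < d -> Rabs (g t' - g t) < eps.
Proof.
  intros Hg t eps Heps. pose proof (ex_derive_continuous g t (Hg t)) as Hc.
  apply (proj1 (filterlim_locally _ _)) with (eps := mkposreal eps Heps) in Hc.
  destruct Hc as [d Hd]. exists (pos d); split; [apply cond_pos|].
  intros t' Ht'. apply (Hd t'). exact Ht'.
Qed.

Lemma cont3e_plus (G : R -> R -> R -> R) (g : R -> R) : cont3e G -> (forall t, ex_derive g t) ->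
  cont3e (fun t x y => G t x y + g t).
Proof.
  intros HG Hg t x y eps Heps.
  destruct (HG t x y (eps/2)) as [d1 [Hd1 H1]]; [lra|].
  destruct (cont1e g Hg t (eps/2)) as [d2 [Hd2 H2]]; [lra|].
  exists (Rmin d1 d2). split; [apply Rmin_glb_lt; auto|].
  intros t' x' y' Ht Hx Hy.
  assert (Hm1 := Rmin_l d1 d2). assert (Hm2 := Rmin_r d1 d2).
  specialize (H1 t' x' y' ltac:(lra) ltac:(lra) ltac:(lra)). specialize (H2 t' ltac:(lra)).
  replace (G t' x' y' + g t' - (G t x y + g t)) with ((G t' x' y' - G t x y) + (g t' - g t)) by ring.
  eapply Rle_lt_trans; [apply Rabs_triang|]. lra.
Qed.

Lemma cont3e_opp_const (G : R -> R -> R -> R) c : cont3e G -> cont3e (fun t x y => c - G t x y).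
Proof.
  intros HG t x y eps Heps. destruct (HG t x y eps Heps) as [d [Hd H]].
  exists d; split; auto. intros t' x' y' H1 H2 H3.
  replace (c - G t' x' y' - (c - G t x y)) with (- (G t' x' y' - G t x y)) by ring.
  rewrite Rabs_Ropp. auto.
Qed.

Lemma is_derive_mul_R (f g : R -> R) x df dg : is_derive f x df -> is_derive g x dg ->
  is_derive (fun s => f s * g s) x (df * g x + f x * dg).
Proof. intros H1 H2. exact (is_derive_mult f g x df dg H1 H2 Rmult_comm). Qed.

Theorem mainTheorem2
  (f : R -> R) (f_lo f_hi : R) (h0 omega nu T : R)
  (u1 u2 : R -> R -> R -> R)       (* velocity field u^o = (u1,u2), arguments t x y *)
  (hm Am : R -> R -> R -> R)        (* solution (h_m, A_m), arguments t x y *)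
  (A_in : R -> R -> R)              (* initial datum on T^2 *)
  (Hf_smooth : smooth1 f)
  (Hf_bnd : forall z, f_lo <= f z <= f_hi)
  (Hh0 : 0 < h0)
  (Homega : 0 < omega < 1) (Hnu : 0 < nu < 1) (HT : 0 < T)
  (Hu_per1 : periodic3 u1) (Hu_per2 : periodic3 u2)
  (Hu_reg1 : C1_3 u1) (Hu_reg2 : C1_3 u2)
  (Hh_per : periodic3 hm) (HA_per : periodic3 Am)
  (Hh_reg : C1_3 hm) (HA_reg : C1_3 Am)
  (Hh_eq : forall t x y, 0 <= t <= T ->
     dt hm t x y + div (fun s a b => hm s a b * u1 s a b)
                       (fun s a b => hm s a b * u2 s a b) t x y
     = S_h f omega nu (hm t x y) (Am t x y))
  (HA_eq : forall t x y, 0 <= t <= T ->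
     dt Am t x y + div (fun s a b => Am s a b * u1 s a b)
                       (fun s a b => Am s a b * u2 s a b) t x y
     = S_A f h0 omega nu (hm t x y) (Am t x y)
       + Am t x y * div u1 u2 t x y * chi_A omega (Am t x y))
  (Hin_per : periodic2 A_in)
  (Hin : forall x y, 0 <= A_in x y <= 1)
  (HA0 : forall x y, Am 0 x y = A_in x y) :
  forall t x y, 0 <= t <= T -> 0 <= Am t x y <= 1.
Proof.
  destruct HA_reg as [At [Ax [Ay [HAd [HAc [HAtc [HAxc HAyc]]]]]]].
  destruct Hu_reg1 as [U1t [U1x [U1y [HU1d [HU1c [HU1tc [HU1xc HU1yc]]]]]]].
  destruct Hu_reg2 as [U2t [U2x [U2y [HU2d [HU2c [HU2tc [HU2xc HU2yc]]]]]]].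
  assert (Heq : forall t x y, 0 <= t <= T ->
    At t x y + Ax t x y * u1 t x y + Ay t x y * u2 t x y =
    S_A f h0 omega nu (hm t x y) (Am t x y)
    + Am t x y * (U1x t x y + U2y t x y) * (chi_A omega (Am t x y) - 1)).
  { intros t x y Ht. specialize (HA_eq t x y Ht). unfold dt, div in HA_eq.
    destruct (HAd t x y) as [Dt [Dx Dy]].
    destruct (HU1d t x y) as [_ [D1x _]]. destruct (HU2d t x y) as [_ [_ D2y]].
    assert (E1 : Derive (fun s => Am s x y) t = At t x y) by (apply is_derive_unique; exact Dt).
    assert (E2 : Derive (fun s => Am t s y * u1 t s y) x = Ax t x y * u1 t x y + Am t x y * U1x t x y)
      by (apply is_derive_unique; exact (is_derive_mul_R (fun s => Am t s y) (fun s => u1 t s y) x _ _ Dx D1x)).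
    assert (E3 : Derive (fun s => Am t x s * u2 t x s) y = Ay t x y * u2 t x y + Am t x y * U2y t x y)
      by (apply is_derive_unique; exact (is_derive_mul_R (fun s => Am t x s) (fun s => u2 t x s) y _ _ Dy D2y)).
    assert (E4 : Derive (fun s => u1 t s y) x = U1x t x y) by (apply is_derive_unique; exact D1x).
    assert (E5 : Derive (fun s => u2 t x s) y = U2y t x y) by (apply is_derive_unique; exact D2y).
    rewrite E1, E2, E3, E4, E5 in HA_eq.
    lra. }
  assert (Hgrad_max : forall t x y, (forall x' y', Am t x' y' <= Am t x y) ->
            Ax t x y = 0 /\ Ay t x y = 0).
  { intros t x y Hm. destruct (HAd t x y) as [_ [Dx Dy]]. split.
    - apply (deriv_max0 (fun s => Am t s y) x); auto.
    - apply (deriv_max0 (fun s => Am t x s) y); auto. }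
  assert (Hgrad_min : forall t x y, (forall x' y', Am t x y <= Am t x' y') ->
            Ax t x y = 0 /\ Ay t x y = 0).
  { intros t x y Hm. destruct (HAd t x y) as [_ [Dx Dy]]. split.
    - apply (deriv_min0 (fun s => Am t s y) x); auto.
    - apply (deriv_min0 (fun s => Am t x s) y); auto. }
  assert (HcA := cont3_e _ HAc). assert (HcAt := cont3_e _ HAtc).
  assert (Hup : forall t x y, 0 <= t <= T -> 0 <= 1 - Am t x y).
  { apply (gen_nonneg (fun t x y => 1 - Am t x y) (fun t x y => 0 - At t x y) T HT).
    - intros t x y. apply (is_derive_minus (fun _ => 1) (fun s => Am s x y)).
      + exact (is_derive_const (1:R) t).
      + apply HAd.
    - apply cont3e_opp_const; auto.
    - apply cont3e_opp_const; auto.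
    - intros t x y. destruct (HA_per t x y) as [E1 E2]. split; cbv beta; congruence.
    - intros x y. rewrite HA0. pose proof (Hin x y). lra.
    - intros t x y Ht Hx Hy Hall H1.
      assert (HA1 : Am t x y = 1) by lra.
      destruct (Hgrad_max t x y) as [Gx Gy].
      { intros x' y'. specialize (Hall x' y'). lra. }
      specialize (Heq t x y ltac:(lra)). rewrite Gx, Gy, HA1 in Heq.
      pose proof (upper_alg f h0 omega nu (hm t x y) (U1x t x y + U2y t x y) Hh0
                   ltac:(lra) ltac:(lra)).
      lra. }
  destruct (bounded3 U1x T (cont3_e _ HU1xc)) as [K1 HK1].
  destruct (bounded3 U2y T (cont3_e _ HU2yc)) as [K2 HK2].
  set (K := K1 + K2). set (C := K + 1).
  assert (HdK : forall t x y, 0 <= t <= T -> 0 <= x <= 1 -> 0 <= y <= 1 ->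
            Rabs (U1x t x y + U2y t x y) <= K).
  { intros t x y Ht Hx Hy. eapply Rle_trans; [apply Rabs_triang|].
    specialize (HK1 t x y Ht Hx Hy). specialize (HK2 t x y Ht Hx Hy). unfold K; lra. }
  assert (Hlow : forall eps, 0 < eps -> forall t x y, 0 <= t <= T ->
            0 <= Am t x y + eps * exp (C * t)).
  { intros eps Heps.
    assert (Hg : forall t, is_derive (fun s => eps * exp (C * s)) t (eps * (C * exp (C * t)))).
    { intros t. auto_derive; auto. ring. }
    apply (gen_nonneg (fun t x y => Am t x y + eps * exp (C * t))
                      (fun t x y => At t x y + eps * (C * exp (C * t))) T HT).
    - intros t x y. apply (is_derive_plus (fun s => Am s x y) (fun s => eps * exp (C * s))).
      + apply HAd.
      + apply Hg.
    - apply (cont3e_plus Am (fun t => eps * exp (C * t))); auto.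
      intros t; eexists; apply Hg.
    - apply (cont3e_plus At (fun t => eps * (C * exp (C * t)))); auto.
      intros t; auto_derive; auto.
    - intros t x y. destruct (HA_per t x y) as [E1 E2]. split; cbv beta; congruence.
    - intros x y. rewrite HA0. pose proof (Hin x y). pose proof (exp_pos (C * 0)).
      pose proof (Rmult_lt_0_compat _ _ Heps H0). lra.
    - intros t x y Ht Hx Hy Hall H1.
      pose proof (exp_pos (C * t)) as He.
      assert (HepsE : 0 < eps * exp (C * t)) by (apply Rmult_lt_0_compat; auto).
      assert (HA1 : Am t x y = - (eps * exp (C * t))) by lra.
      destruct (Hgrad_min t x y) as [Gx Gy].
      { intros x' y'. specialize (Hall x' y'). lra. }
      specialize (Heq t x y ltac:(lra)). rewrite Gx, Gy in Heq.
      pose proof (lower_alg f h0 omega nu (hm t x y) (Am t x y) (U1x t x y + U2y t x y) K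
                   Hh0 ltac:(lra) ltac:(lra) ltac:(lra) (HdK t x y ltac:(lra) Hx Hy)).
      cbv beta.
      assert (Hk : K * Am t x y = - (K * (eps * exp (C * t)))) by (rewrite HA1; ring).
      replace (eps * (C * exp (C * t))) with (K * (eps * exp (C * t)) + eps * exp (C * t)) by (unfold C; ring).
      rewrite Rmult_0_l, Rmult_0_l, !Rplus_0_r in Heq.
      lra. }
  intros t x y Ht. split; [|specialize (Hup t x y Ht); lra].
  destruct (Rle_dec 0 (Am t x y)) as [|Hn]; auto. exfalso.
  pose proof (exp_pos (C * t)) as He.
  assert (Heps : 0 < - Am t x y / (2 * exp (C * t))) by (apply Rdiv_lt_0_compat; lra).
  specialize (Hlow _ Heps t x y Ht).
  replace (- Am t x y / (2 * exp (C * t)) * exp (C * t)) with (- Am t x y / 2) in Hlow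
    by (field; lra).
  lra.
Qed.
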